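(* Fix $\theta\in\mathbb R$ and let $\tau^\star(\theta)$ be the equalizing prejudice. Then for $\tau\in(-x_u,x_q)$, $s_1(\theta,\tau)>s_2(\theta,\tau)$ if and only if $\tau>\tau^\star(\theta)$ (equivalently, $s_1(\theta,\tau)<s_2(\theta,\tau)$ iff $\tau<\tau^\star(\theta)$).
   Context: Setup. Let $Q\in\{0,1\}$ be a random variable with $\mathbb P(Q=1)=\pi\in(0,1)$, and let $(\Theta,\Gamma)$ be a real-valued random vector whose conditional joint density given $Q=1$ is $h_q(\theta,\gamma)$ and given $Q=0$ is $h_u(\theta,\gamma)$, both strictly positive on $\mathbb R^2$. Monotone likelihood ratio assumption: $l(\theta,\gamma)=h_q(\theta,\gamma)/h_u(\theta,\gamma)$ is continuous and strictly increasing in each of $\theta$ and $\gamma$, and for each $\theta$ the map $\gamma\mapsto l(\theta,\gamma)$ has infimum $0$ and supremum $+\infty$. Fix payoffs $x_q>0$, $x_u>0$. For $\tau\in(-x_u,x_q)$ let $A(\tau)=\mathbb 1\{l(\Theta,\Gamma)>\frac{(1-\pi)(x_u+\tau)}{\pi(x_q-\tau)}\}$. Define $s_1(\theta,\tau)=\mathbb E[Q\mid\Theta=\theta,A(\tau)=1]$ and $s_2(\theta,\tau)=\mathbb E[A(\tau)\mid\Theta=\theta]$. The equalizing prejudice $\tau^\star(\theta)$ is the unique $\tau\in(-x_u,x_q)$ with $s_1(\theta,\tau)=s_2(\theta,\tau)$. *)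

(* Defs.v *)
From HB Require Import structures.
From mathcomp Require Import all_boot all_order all_algebra.
From mathcomp Require Import all_classical all_reals all_analysis.
Set Implicit Arguments. Unset Strict Implicit. Unset Printing Implicit Defensive.
Import Order.TTheory GRing.Theory Num.Theory.
Import numFieldNormedType.Exports.
Local Open Scope classical_set_scope.
Local Open Scope ring_scope.

Section Defs.
Variable R : realType.
Local Notation leb := (@lebesgue_measure R).

Definition lratio (hq hu : R -> R -> R) (t g : R) : R := hq t g / hu t g.

Definition thresh (pi xq xu tau : R) : R :=
  (1 - pi) * (xu + tau) / (pi * (xq - tau)).

(* {gamma | A(tau) = 1 at Theta = theta} *)
Definition accept_set (pi xq xu : R) (hq hu : R -> R -> R) (t tau : R) : set R :=
  [set g | thresh pi xq xu tau < lratio hq hu t g].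

Definition sect_int (h : R -> R -> R) (t : R) (S : set R) : R :=
  Rintegral leb S (h t).

(* P(A(tau)=1, Q = . , Theta in d theta)/d theta, summed over Q *)
Definition acc_mass pi xq xu hq hu t tau : R :=
  pi * sect_int hq t (accept_set pi xq xu hq hu t tau)
  + (1 - pi) * sect_int hu t (accept_set pi xq xu hq hu t tau).

(* s_1(theta,tau) = E[Q | Theta = theta, A(tau) = 1]  (Bayes with densities) *)
Definition s1 pi xq xu hq hu t tau : R :=
  pi * sect_int hq t (accept_set pi xq xu hq hu t tau)
  / acc_mass pi xq xu hq hu t tau.

(* s_2(theta,tau) = E[A(tau) | Theta = theta] *)
Definition s2 pi xq xu hq hu t tau : R :=
  acc_mass pi xq xu hq hu t tau
  / (pi * sect_int hq t setT + (1 - pi) * sect_int hu t setT).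

(* h is a strictly positive joint probability density on R^2 whose
   theta-sections are integrable (so conditioning on Theta = theta is defined
   pointwise through densities) *)
Definition pos_density (h : R -> R -> R) : Prop :=
  (forall t g, 0 < h t g) /\
  measurable_fun [set: R * R] (fun p : R * R => h p.1 p.2) /\
  (\int[(leb \x leb)%E]_p (h p.1 p.2)%:E = 1)%E /\
  (forall t, leb.-integrable [set: R] (fun g => (h t g)%:E)).

Definition MLR (hq hu : R -> R -> R) : Prop :=
  continuous (fun p : R * R => lratio hq hu p.1 p.2) /\
  (forall g x y, x < y -> lratio hq hu x g < lratio hq hu y g) /\
  (forall t x y, x < y -> lratio hq hu t x < lratio hq hu t y) /\
  (forall t e, 0 < e -> exists g, lratio hq hu t g < e) /\
  (forall t M, exists g, M < lratio hq hu t g).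

End Defs.

(* Main.v *)
Require Import Defs.
From HB Require Import structures.
From mathcomp Require Import all_boot all_order all_algebra.
From mathcomp Require Import all_classical all_reals all_analysis.
Import Order.TTheory GRing.Theory Num.Theory.
Local Open Scope classical_set_scope.
Local Open Scope ring_scope.
Import measurable_realfun.
From mathcomp Require Import lra ring.
Lemma int_pos (R : realType) (f : R -> R) (S : set R) :
  measurable S -> measurable_fun S f -> (forall x, S x -> 0 < f x) ->
  (0 < (@lebesgue_measure R) S)%E ->
  (0 < \int[@lebesgue_measure R]_(x in S) (f x)%:E)%E.
Proof.
move=> mS mf fpos Spos.
rewrite lt_neqAle integral_ge0; last by move=> x Sx; rewrite lee_fin ltW ?fpos.
rewrite andbT; apply/negP => /eqP I0.
pose Sn (n : nat) := S `&` [set x | ((n.+1%:R)^-1%:E <= `|(f x)%:E|)%E].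
have Sn0 n : (@lebesgue_measure R) (Sn n) = 0%E.
  have := @le_integral_comp_abse _ _ _ (@lebesgue_measure R) S mS (EFin \o f)
    (n.+1%:R)^-1 id (@measurable_id _ _ _) (fun r r0 => r0).
  move=> /(_ _ _ _) H.
  have {H} := H (fun x y _ _ xy => xy) ltac:(exact/measurable_EFinP) ltac:(by rewrite invr_gt0).
  have -> : (\int[lebesgue_measure]_(x in S) id `|(EFin \o f) x|)%E = 0%E.
    rewrite I0; apply: eq_integral => x /[!inE] Sx /=.
    by rewrite ger0_norm // ltW ?fpos.
  rewrite /= => H; apply/eqP; rewrite eq_le measure_ge0 andbT.
  rewrite -(@lee_pmul2l _ (n.+1%:R^-1)%:E) ?mule0 //.

have : (@lebesgue_measure R).-negligible S.
  have NB : (@lebesgue_measure R).-negligible (\bigcup_n Sn n).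
    apply: negligible_bigcup => k; exists (Sn k); split => //; last exact: Sn0.
    apply: emeasurable_fun_c_infty => //; apply: measurableT_comp => //.
    exact/measurable_EFinP.
  apply: negligibleS NB.
    move=> x Sx; have fx := fpos x Sx.
    exists (Num.Def.trunc (f x)^-1) => //; split => //=.
    rewrite /= ger0_norm ?ltW // lte_fin.
    rewrite -[X in _ < X](invrK (f x)) ltf_pV2 ?posrE ?invr_gt0 //.
    exact: truncnS_gt.
move=> NS; have S0 := @measure_negligible _ _ _ (@lebesgue_measure R) S mS NS.
by move: Spos; rewrite S0 ltxx.
Qed.

Lemma sect_meas (R : realType) (h : R -> R -> R) t :
  pos_density h -> measurable_fun setT (h t).
Proof.
move=> [_ [_ [_ hi]]]; have /integrableP[mh _] := hi t.
exact/measurable_EFinP.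
Qed.

Lemma sect_integrable (R : realType) (h : R -> R -> R) t (S : set R) :
  pos_density h -> measurable S -> (@lebesgue_measure R).-integrable S (EFin \o h t).
Proof.
move=> [_ [_ [_ hi]]] mS; exact: integrableS (hi t).
Qed.

Lemma A_meas (R : realType) pi xq xu (hq hu : R -> R -> R) t tau :
  pos_density hq -> pos_density hu ->
  measurable (accept_set pi xq xu hq hu t tau).
Proof.
move=> dq du.
have huP := du.1.
have -> : accept_set pi xq xu hq hu t tau =
  [set g | thresh pi xq xu tau * hu t g < hq t g].
  by apply/seteqP; split => g; rewrite /accept_set /lratio /= ltr_pdivlMr.
have mf := measurable_fun_ltr (measurable_funM (@measurable_cst _ _ _ _ setT (thresh pi xq xu tau)) (@sect_meas _ _ t du)) (@sect_meas _ _ t dq).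
have := mf measurableT [set true] I.
rewrite setTI; congr measurable; apply/seteqP; split => g /=; by [].
Qed.

Lemma sect_split (R : realType) (h : R -> R -> R) t (S1 S2 : set R) :
  pos_density h -> measurable S1 -> measurable S2 -> S2 `<=` S1 ->
  sect_int h t S1 = sect_int h t S2 + sect_int h t (S1 `\` S2).
Proof.
move=> dh m1 m2 S21.
rewrite /sect_int -Rintegral_setU //.
- by rewrite setDUK.
- exact: measurableD.
- by rewrite setDUK //; exact: sect_integrable.
- by rewrite /disj_set setDIK.
Qed.

Lemma A_pos (R : realType) pi xq xu (hq hu h : R -> R -> R) t tau :
  pos_density hq -> pos_density hu -> MLR hq hu -> pos_density h ->
  0 < sect_int h t (accept_set pi xq xu hq hu t tau).
Proof.
move=> dq du [_ [_ [Lmono [_ Lub]]]] dh.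
have [g0 Hg0] := Lub t (thresh pi xq xu tau).
pose I := `[g0, g0 + 1]%classic.
have mI : measurable I by exact: measurable_itv.
have IA : I `<=` accept_set pi xq xu hq hu t tau.
  move=> x; rewrite /I /= in_itv /= => /andP[g0x _].
  rewrite /accept_set /=; apply: (lt_le_trans Hg0).
  move: g0x; rewrite le_eqVlt => /predU1P[-> //|/(Lmono t) /ltW //].
rewrite (@sect_split _ h t _ I) //; last exact: A_meas.
apply: ltr_pwDl; last by apply: Rintegral_ge0 => x _; exact: ltW (dh.1 _ _).
apply: fine_gt0; apply/andP; split.
  apply: int_pos => //.
  - exact: measurable_funS (@sect_meas _ _ t dh).
  - by move=> x _; exact: dh.1.
  - rewrite /I lebesgue_measure_itv /= lte_fin ltrDl ltr01 /=.
    by rewrite -EFinD addrAC subrr add0r lte_fin ltr01.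
have : (\int[lebesgue_measure]_(x in I) (h t x)%:E)%E \is a fin_num.
  by apply: integrable_fin_num => //; exact: sect_integrable.
by move/fin_numPlt/andP => [].
Qed.

Lemma intZ_integrable (R : realType) (f : R -> R) c (S : set R) :
  measurable S -> (@lebesgue_measure R).-integrable S (EFin \o f) ->
  (@lebesgue_measure R).-integrable S (EFin \o (fun x => c * f x)).
Proof.
move=> mS fi; apply: (@eq_integrable _ _ _ (@lebesgue_measure R) S mS (fun x => (c%:E * (f x)%:E)%E)).
  by move=> x _.
exact: integrableZl.
Qed.

Lemma int_cmp1 (R : realType) (f g : R -> R) c (S : set R) :
  measurable S -> (@lebesgue_measure R).-integrable S (EFin \o f) ->
  (@lebesgue_measure R).-integrable S (EFin \o g) ->
  (forall x, S x -> c * f x <= g x) ->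
  c * Rintegral (@lebesgue_measure R) S f <= Rintegral (@lebesgue_measure R) S g.
Proof.
move=> mS fi gi H; rewrite -RintegralZl //.
apply: le_Rintegral => //; exact: intZ_integrable.
Qed.

Lemma int_cmp2 (R : realType) (f g : R -> R) c (S : set R) :
  measurable S -> (@lebesgue_measure R).-integrable S (EFin \o f) ->
  (@lebesgue_measure R).-integrable S (EFin \o g) ->
  (forall x, S x -> g x <= c * f x) ->
  Rintegral (@lebesgue_measure R) S g <= c * Rintegral (@lebesgue_measure R) S f.
Proof.
move=> mS fi gi H; rewrite -RintegralZl //.
apply: le_Rintegral => //; exact: intZ_integrable.
Qed.

Lemma thresh_le (R : realType) (pi xq xu tau1 tau2 : R) :
  0 < pi < 1 -> 0 < xq -> 0 < xu -> - xu < tau1 -> tau1 <= tau2 -> tau2 < xq ->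
  thresh pi xq xu tau1 <= thresh pi xq xu tau2.
Proof.
move=> /andP[p0 p1] q0 u0 h1 h12 h2.
have b1 : 0 < pi * (xq - tau1) by apply: mulr_gt0; lra.
have b2 : 0 < pi * (xq - tau2) by apply: mulr_gt0; lra.
rewrite /thresh ler_pdivrMr // mulrAC ler_pdivlMr //.
have e1 : 0 <= 1 - pi by lra.
have e2 : 0 <= (xu + xq) * (tau2 - tau1) by apply: mulr_ge0; lra.
have := mulr_ge0 (mulr_ge0 e1 (ltW p0)) e2.
move=> H; rewrite -subr_ge0; apply: (le_trans H); rewrite le_eqVlt; apply/orP; left; apply/eqP; ring.
Qed.

Lemma frac_le (R : realType) (x y m1 m2 : R) :
  0 < m1 -> 0 < m2 -> x * m2 <= y * m1 -> x / m1 <= y / m2.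
Proof.
move=> h1 h2 H; rewrite ler_pdivrMr // mulrAC ler_pdivlMr //.
Qed.

Lemma mono (R : realType) (pi xq xu : R) (hq hu : R -> R -> R) (t tau1 tau2 : R) :
  0 < pi < 1 -> 0 < xq -> 0 < xu ->
  pos_density hq -> pos_density hu -> MLR hq hu ->
  - xu < tau1 -> tau1 <= tau2 -> tau2 < xq ->
  s1 pi xq xu hq hu t tau1 - s2 pi xq xu hq hu t tau1 <=
  s1 pi xq xu hq hu t tau2 - s2 pi xq xu hq hu t tau2.
Proof.
move=> hpi q0 u0 dq du dm h1 h12 h2.
have /andP[p0 p1] := hpi.
have mA1 := @A_meas _ pi xq xu _ _ t tau1 dq du.
have mA2 := @A_meas _ pi xq xu _ _ t tau2 dq du.
set A1 := accept_set pi xq xu hq hu t tau1 in mA1 *.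
set A2 := accept_set pi xq xu hq hu t tau2 in mA2 *.
set c2 := thresh pi xq xu tau2.
have sub : A2 `<=` A1.
  move=> g; rewrite /A1 /A2 /accept_set /= => H.
  exact: le_lt_trans (@thresh_le _ pi xq xu tau1 tau2 hpi q0 u0 h1 h12 h2) H.
have mD : measurable (A1 `\` A2) by exact: measurableD.
have ea := @sect_split _ hq t A1 A2 dq mA1 mA2 sub.
have eb := @sect_split _ hu t A1 A2 du mA1 mA2 sub.
have huP := proj1 du; have hqP := proj1 dq.
have a2g : c2 * sect_int hu t A2 <= sect_int hq t A2.
  apply: int_cmp1 => //; try exact: sect_integrable.
  move=> x Ax; apply: ltW; rewrite -ltr_pdivlMr //; exact: Ax.
have aDl : sect_int hq t (A1 `\` A2) <= c2 * sect_int hu t (A1 `\` A2).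
  apply: int_cmp2 => //; try exact: sect_integrable.
  move=> x [_ nA2]; rewrite -ler_pdivrMr //; rewrite leNgt; apply/negP => H.
  exact: nA2.
have a2p : 0 < sect_int hq t A2 by exact: A_pos.
have b2p : 0 <= sect_int hu t A2 by apply: Rintegral_ge0 => x _; exact: ltW.
have bDp : 0 <= sect_int hu t (A1 `\` A2) by apply: Rintegral_ge0 => x _; exact: ltW.
have aDp : 0 <= sect_int hq t (A1 `\` A2) by apply: Rintegral_ge0 => x _; exact: ltW.
have Nq : 0 <= sect_int hq t setT by apply: Rintegral_ge0 => x _; exact: ltW.
have Nu : 0 <= sect_int hu t setT by apply: Rintegral_ge0 => x _; exact: ltW.
rewrite /s1 /s2 /acc_mass -/A1 -/A2 ea eb.
move: a2g aDl a2p b2p bDp aDp Nq Nu.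
set a2 := sect_int hq t A2; set aD := sect_int hq t (A1 `\` A2).
set b2 := sect_int hu t A2; set bD := sect_int hu t (A1 `\` A2).
set Nn := (pi * sect_int hq t setT + (1 - pi) * sect_int hu t setT).
move=> a2g aDl a2p b2p bDp aDp Nq Nu.
have key : aD * b2 <= a2 * bD.
  have K1 := ler_wpM2r b2p aDl; have K2 := ler_wpM2r bDp a2g.
  apply: (le_trans K1); by rewrite mulrAC.
have m2p : 0 < pi * a2 + (1 - pi) * b2.
  apply: ltr_pwDl; [exact: mulr_gt0 | apply: mulr_ge0 => //; lra].
have m12 : pi * a2 + (1 - pi) * b2 <= pi * (a2 + aD) + (1 - pi) * (b2 + bD).
  rewrite !mulrDr; apply: lerD; rewrite lerDl; apply: mulr_ge0 => //; lra.
have m1p := lt_le_trans m2p m12.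
have Np : 0 <= Nn by rewrite /Nn; apply: addr_ge0; apply: mulr_ge0 => //; lra.
apply: lerB.
  apply: frac_le => //.
  have pq : 0 <= pi * (1 - pi) by apply: mulr_ge0; lra.
  have := ler_wpM2l pq key.
  move=> H; rewrite -subr_ge0; apply: (le_trans (_ : 0 <= pi * (1 - pi) * (a2 * bD) - pi * (1 - pi) * (aD * b2))).
    by rewrite subr_ge0.
  rewrite le_eqVlt; apply/orP; left; apply/eqP; ring.
by apply: ler_wpM2r => //; rewrite invr_ge0.
Qed.

Theorem mainTheorem5 (R : realType) (pi xq xu : R) (hq hu : R -> R -> R)
  (theta tstar : R) :
  0 < pi < 1 -> 0 < xq -> 0 < xu ->
  pos_density hq -> pos_density hu -> MLR hq hu ->
  (* tstar is the equalizing prejudice tau*(theta): the unique tau in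
     (-x_u, x_q) with s1 = s2 *)
  - xu < tstar < xq ->
  s1 pi xq xu hq hu theta tstar = s2 pi xq xu hq hu theta tstar ->
  (forall tau, - xu < tau < xq ->
     s1 pi xq xu hq hu theta tau = s2 pi xq xu hq hu theta tau -> tau = tstar) ->
  forall tau, - xu < tau < xq ->
    (s2 pi xq xu hq hu theta tau < s1 pi xq xu hq hu theta tau <-> tstar < tau) /\
    (s1 pi xq xu hq hu theta tau < s2 pi xq xu hq hu theta tau <-> tau < tstar).
Proof.
move=> hpi q0 u0 dq du dm /andP[ts1 ts2] Eq Uniq tau /andP[t1 t2].
set F := fun x => s1 pi xq xu hq hu theta x - s2 pi xq xu hq hu theta x.
have F0 : F tstar = 0 by rewrite /F Eq subrr.
have Fm : forall x y, - xu < x -> x <= y -> y < xq -> F x <= F y.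
  move=> x y hx hxy hy; exact: mono.
have Fne : tau != tstar -> F tau != 0.
  move=> ne; apply/negP => /eqP H; move/eqP: ne; apply; apply: Uniq.
    by rewrite t1 t2.
  by apply/eqP; rewrite -subr_eq0; apply/eqP.
split; split.
- move=> H; rewrite ltNge; apply/negP => le.
  have := Fm _ _ t1 le ts2; rewrite F0 /F subr_le0 => H2.
  by move: H; rewrite ltNge H2.
- move=> lt; have := Fm _ _ ts1 (ltW lt) t2; rewrite F0 => H.
  have : F tau != 0 by apply: Fne; rewrite gt_eqF.
  move=> H3; have : 0 < F tau by rewrite lt_neqAle eq_sym H3 H.
  by rewrite /F subr_gt0.
- move=> H; rewrite ltNge; apply/negP => le.
  have := Fm _ _ ts1 le t2; rewrite F0 /F subr_ge0 => H2.
  by move: H; rewrite ltNge H2.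
- move=> lt; have := Fm _ _ t1 (ltW lt) ts2; rewrite F0 => H.
  have : F tau != 0 by apply: Fne; rewrite lt_eqF.
  move=> H3; have : F tau < 0 by rewrite lt_neqAle H3 H.
  by rewrite /F subr_lt0.
Qed.
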